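(* Let $n\ge1$, $t\in\mathrm{PST}_n$ with leaves $\ell_1,\dots,\ell_{n+1}$ from left to right, let $A\in\mathcal A_n$ be its image under the bijection described in the context, and let $\pi$ be the noncrossing partition of $[n]$ whose blocks are the sets of leaf labels of the trees of $A$. Then for $i,j\in[n]$, $i$ and $j$ lie in the same block of the Kreweras complement $\pi^c$ if and only if some internal vertex of $t$ has a clear view to both the $i$th and the $j$th sectors of $t$.
   Context: A reduced plane tree is a rooted plane tree in which every internal node has at least two children; its weight is its number of leaves minus 1. A reduced plane tree with at least two leaves is prime if the rightmost child of its root is a leaf; $\mathrm{PST}_n$ is the set of prime reduced plane trees of weight $n$. A middle edge is an edge from an internal vertex $v$ to a child of $v$ which is neither the leftmost nor the rightmost child of $v$. $\mathcal A_n$ is the set of noncrossing arrangements of binary trees on $[n]$: sets of binary plane trees (internal nodes with exactly two children, single leaves allowed) whose leaves are labeled by $1,\dots,n$, each once, increasingly from left to right in each tree, such that the leaf-label sets form a noncrossing partition of $[n]$. The bijection $\mathrm{PST}_n\to\mathcal A_n$: delete all middle edges of $t$, delete the root and the edges from the root to its children, discard the rightmost leaf of $t$, and label the remaining leaves $1,\dots,n$ from left to right. The $i$th sector of $t$ ($1\le i\le n$) is the region between the leaves $\ell_i$ and $\ell_{i+1}$; an internal vertex $v$ has a clear view to the $i$th sector iff $v$ is the lowest common ancestor of $\ell_i$ and $\ell_{i+1}$. The Kreweras complement of a noncrossing partition $\pi$ of $[n]$ is defined as follows: order the $2n$ points $1<1'<2<2'<\dots<n<n'$; $\pi^c$ is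 the coarsest partition of $\{1',\dots,n'\}$ such that $\pi\cup\pi^c$ is a noncrossing partition of these $2n$ points; it is then identified with a partition of $[n]$ by dropping the primes. *)

(* Defs.v *)
From mathcomp Require Import all_boot.
From Stdlib Require Import Relations.Relation_Operators.

Set Implicit Arguments.
Unset Strict Implicit.
Unset Printing Implicit Defensive.

Inductive ptree : Type := Node : seq ptree -> ptree.

Definition children (t : ptree) : seq ptree := let: Node ts := t in ts.

(* Vertices of a tree are addressed by paths from the root: the list of
   (0-based) child indices.  [subtree t p] is the subtree rooted at vertex p,
   or None if p is not a vertex of t. *)
Fixpoint subtree (t : ptree) (p : seq nat) : option ptree :=
  match p with
  | [::] => Some t
  | k :: p' => let: Node ts := t in
               if k < size ts then subtree (nth (Node [::]) ts k) p' else None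
  end.

Definition is_vertex (t : ptree) (p : seq nat) : bool := subtree t p.

Definition nchildren (t : ptree) (p : seq nat) : nat :=
  if subtree t p is Some u then size (children u) else 0.

Definition internal (t : ptree) (p : seq nat) : Prop :=
  is_vertex t p /\ 0 < nchildren t p.

Fixpoint leaves (t : ptree) : seq (seq nat) :=
  match t with
  | Node [::] => [:: [::]]
  | Node ts =>
      (fix aux (i : nat) (l : seq ptree) : seq (seq nat) :=
         match l with
         | [::] => [::]
         | u :: l' => map (cons i) (leaves u) ++ aux i.+1 l'
         end) 0 ts
  end.

(* the i-th leaf l_i (1-based) *)
Definition leaf (t : ptree) (i : nat) : seq nat := nth [::] (leaves t) i.-1.

Definition reduced (t : ptree) : Prop :=
  forall p, is_vertex t p -> nchildren t p = 0 \/ 2 <= nchildren t p.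

Definition weight (t : ptree) : nat := (size (leaves t)).-1.

Definition prime_tree (t : ptree) : Prop :=
  2 <= size (leaves t) /\ last (Node [::]) (children t) = Node [::].

Definition PST (n : nat) (t : ptree) : Prop :=
  reduced t /\ prime_tree t /\ weight t = n.

(* Edges of t kept by the bijection: an edge from vertex u to its k-th child
   is kept iff u is not the root and the child is leftmost or rightmost
   (i.e. middle edges and root edges are deleted). *)
Definition kept_edge (t : ptree) (u v : seq nat) : Prop :=
  exists k, v = rcons u k /\ k < nchildren t u /\ u <> [::] /\
            (k = 0 \/ k = (nchildren t u).-1).

Definition same_component (t : ptree) : seq nat -> seq nat -> Prop :=
  clos_refl_sym_trans (seq nat) (kept_edge t).

Definition piRel (t : ptree) (i j : nat) : Prop :=
  same_component t (leaf t i) (leaf t j).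

Definition is_lca (v a b : seq nat) : Prop :=
  prefix v a /\ prefix v b /\
  forall w : seq nat, prefix w a -> prefix w b -> prefix w v.

Definition clear_view (t : ptree) (v : seq nat) (i : nat) : Prop :=
  internal t v /\ is_lca v (leaf t i) (leaf t i.+1).

(* A partition of [n] = {1..n} given as an equivalence relation on [n]. *)
Definition in_n (n i : nat) : bool := (1 <= i <= n).

Definition is_partition (n : nat) (R : nat -> nat -> Prop) : Prop :=
  (forall i, in_n n i -> R i i) /\
  (forall i j, in_n n i -> in_n n j -> R i j -> R j i) /\
  (forall i j k, in_n n i -> in_n n j -> in_n n k -> R i j -> R j k -> R i k).

(* The 2n points 1 < 1' < 2 < 2' < ... < n < n':
   (false, k) is k and (true, k) is k'. *)
Definition pt_pos (x : bool * nat) : nat :=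
  if x.1 then x.2.*2 else x.2.*2.-1.

Definition union_rel (pi sigma : nat -> nat -> Prop) (x y : bool * nat) : Prop :=
  match x.1, y.1 with
  | false, false => pi x.2 y.2
  | true, true => sigma x.2 y.2
  | _, _ => False
  end.

Definition noncrossing_union (n : nat) (pi sigma : nat -> nat -> Prop) : Prop :=
  forall a b c d : bool * nat,
    in_n n a.2 -> in_n n b.2 -> in_n n c.2 -> in_n n d.2 ->
    pt_pos a < pt_pos b -> pt_pos b < pt_pos c -> pt_pos c < pt_pos d ->
    union_rel pi sigma a c -> union_rel pi sigma b d -> union_rel pi sigma a b.

Definition kreweras (n : nat) (pi sigma : nat -> nat -> Prop) : Prop :=
  is_partition n sigma /\ noncrossing_union n pi sigma /\
  forall sigma', is_partition n sigma' -> noncrossing_union n pi sigma' ->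
    forall i j, in_n n i -> in_n n j -> sigma' i j -> sigma i j.

(* Main.v *)
Require Import Defs.
From mathcomp Require Import all_boot zify.
From Stdlib Require Import Relations.Relation_Operators.
Set Implicit Arguments. Unset Strict Implicit. Unset Printing Implicit Defensive.

Fixpoint lexlt (x y : seq nat) : bool :=
  match x, y with
  | _, [::] => false
  | [::], _ :: _ => true
  | a :: x', b :: y' => (a < b) || ((a == b) && lexlt x' y')
  end.
Definition lexle x y := (x == y) || lexlt x y.

Lemma lexlt_irr x : lexlt x x = false.
Proof. by elim: x => //= a x ->; rewrite ltnn andbF. Qed.

Lemma lexlt_asym x y : lexlt x y -> lexlt y x = false.
Proof.
elim: x y => [|a x IH] [|b y] //=.
case: (ltngtP a b) => //= _; exact: IH.
Qed.

Lemma lexlt_total x y : x != y -> lexlt x y || lexlt y x.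
Proof.
elim: x y => [|a x IH] [|b y] //=.
rewrite eqseq_cons; case: (ltngtP a b) => //= _; exact: IH.
Qed.

Lemma lexlt_cat w x y : lexlt (w ++ x) (w ++ y) = lexlt x y.
Proof. by elim: w => //= a w ->; rewrite ltnn eqxx. Qed.

Lemma prefix_sizeE (a b : seq nat) : prefix a b -> size b <= size a -> a = b.
Proof.
move=> /prefixP[s ->]; rewrite size_cat => h.
have : size s = 0 by move: h; rewrite -{2}[size a]addn0 leq_add2l leqn0 => /eqP.
by move/size0nil ->; rewrite cats0.
Qed.

Lemma prefix_antisym (a b : seq nat) : prefix a b -> prefix b a -> a = b.
Proof. move=> h1 h2; exact: (prefix_sizeE h1 (size_prefix h2)). Qed.

Lemma prefix_total (a b x : seq nat) : prefix a x -> prefix b x -> prefix a b || prefix b a.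
Proof.
move=> ha hb.
have -> : a = take (size a) x by apply/esym/eqP; rewrite -prefixE.
have -> : b = take (size b) x by apply/esym/eqP; rewrite -prefixE.
have key i j : i <= j -> prefix (take i x) (take j x).
  by move=> h; rewrite -(take_takel _ h) prefix_take.
case: (leqP (size a) (size b)) => h; first by rewrite key.
by rewrite (key (size b) (size a)) ?orbT // ltnW.
Qed.

Lemma prefix_nth (w x : seq nat) : prefix w x -> size w < size x ->
  prefix (rcons w (nth 0 x (size w))) x.
Proof.
move=> /prefixP[s ->]; rewrite size_cat -ltn_subLR ?subnn // => hs.
rewrite nth_cat ltnn subnn -cats1; case: s hs => //= a s _.
by rewrite -[a :: s]cat1s catA prefix_prefix.
Qed.

Lemma prefix_nth_eq (w x y : seq nat) : prefix w x -> size w < size x ->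
   prefix w y -> size w < size y -> nth 0 x (size w) = nth 0 y (size w) ->
   prefix (rcons w (nth 0 x (size w))) y.
Proof. by move=> _ _ hy hy' ->; exact: prefix_nth. Qed.

Lemma lexle_prefix w x y : lexle (w ++ x) (w ++ y) = lexle x y.
Proof. by rewrite /lexle lexlt_cat eqseq_cat // eqxx. Qed.

Lemma lexle_cons a b (x y : seq nat) :
  lexle (a :: x) (b :: y) = (a < b) || ((a == b) && lexle x y).
Proof.
rewrite /lexle /= eqseq_cons; case: (ltngtP a b) => //=.
Qed.

Lemma conv (w x y z : seq nat) : lexle x y -> lexle y z -> prefix w x -> prefix w z -> prefix w y.
Proof.
elim: w x y z => [|a w IH] x y z; first by move=> *; exact: prefix0s.
case: x => [|a1 x] // h1 h2 /andP[/eqP E1 hx]; subst a1.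
case: z h2 => [|a2 z] // h2 /andP[/eqP E2 hz]; subst a2.
case: y h1 h2 => [|c y] //; rewrite !lexle_cons /= => h1 h2.
case: (ltngtP a c) h1 h2 => //=.
move=> _ h1 h2; exact: (IH x y z).
Qed.

Lemma idx_le (w x y : seq nat) : prefix w x -> prefix w y -> size w < size x -> size w < size y ->
  lexle x y -> nth 0 x (size w) <= nth 0 y (size w).
Proof.
move=> /prefixP[x' ->] /prefixP[y' ->]; rewrite lexle_prefix !nth_cat ltnn subnn !size_cat.
case: x' => [|a x']; rewrite /= ?addn0 ?ltnn // => _.
case: y' => [|b y']; rewrite /= ?addn0 ?ltnn // => _.
rewrite /lexle eqseq_cons /=; case: (ltngtP a b) => //=; by rewrite ?andbF.
Qed.

Lemma idx_lt (w x y : seq nat) : prefix w x -> prefix w y -> size w < size x -> size w < size y ->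
  nth 0 x (size w) < nth 0 y (size w) -> lexlt x y.
Proof.
move=> /prefixP[x' ->] /prefixP[y' ->]; rewrite lexlt_cat !nth_cat ltnn subnn !size_cat.
case: x' => [|a x']; rewrite /= ?addn0 ?ltnn // => _.
by case: y' => [|b y']; rewrite /= ?addn0 ?ltnn // => _ ->.
Qed.

Fixpoint lcp (x y : seq nat) : seq nat :=
  match x, y with
  | a :: x', b :: y' => if a == b then a :: lcp x' y' else [::]
  | _, _ => [::]
  end.

Lemma lcp_prefixl x y : prefix (lcp x y) x.
Proof. elim: x y => [|a x IH] [|b y] //=; case: ifP => //= _; by rewrite eqxx IH. Qed.

Lemma lcp_prefixr x y : prefix (lcp x y) y.
Proof. elim: x y => [|a x IH] [|b y] //=; case: ifP => //= /eqP ->; by rewrite eqxx IH. Qed.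

Lemma lcp_max (u x y : seq nat) : prefix u x -> prefix u y -> prefix u (lcp x y).
Proof.
elim: u x y => [|c u IH] x y; first by move=> *; exact: prefix0s.
case: x => // a x; case: y => // b y /= /andP[/eqP <- hx] /andP[/eqP <- hy].
rewrite eqxx /= eqxx /=; exact: IH.
Qed.

Lemma lcp_eq (w x y : seq nat) : prefix w x -> prefix w y -> size w < size x -> size w < size y ->
  nth 0 x (size w) != nth 0 y (size w) -> lcp x y = w.
Proof.
elim: w x y => [|c w IH] [|a x] [|b y] //=.
  by move=> _ _ _ _; case: ifP.
move=> /andP[/eqP <- hx] /andP[/eqP <- hy] h1 h2 h3.
by rewrite eqxx (IH x y).
Qed.

Lemma lcp_split (x y : seq nat) : ~~ prefix x y -> ~~ prefix y x ->
  [/\ size (lcp x y) < size x, size (lcp x y) < size y &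
      (lexlt x y -> nth 0 x (size (lcp x y)) < nth 0 y (size (lcp x y)))].
Proof.
elim: x y => [|a x IH] [|b y] //=.
case: (eqVneq a b) => [<-|ne] /=; rewrite ?eqxx /=.
  by move=> h1 h2; case: (IH y h1 h2) => h3 h4 h5; split => //; rewrite ltnn.
by move=> _ _; split => //; rewrite orbF.
Qed.

Lemma is_lca_lcp (v a b : seq nat) : is_lca v a b <-> v = lcp a b.
Proof.
split.
  case=> h1 [h2 h3]; apply: prefix_antisym; first exact: lcp_max.
  apply: h3; [exact: lcp_prefixl | exact: lcp_prefixr].
move=> ->; split; [exact: lcp_prefixl|split; [exact: lcp_prefixr|]].
by move=> w; apply: lcp_max.
Qed.

Lemma lexlt_zeros (s z : seq nat) : all (fun k => k == 0) z -> lexlt s z -> prefix s z.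
Proof.
elim: s z => [|a s IH] [|b z] //= /andP[/eqP -> hz].
rewrite ltn0 /= => /andP[/eqP -> h]; by rewrite eqxx IH.
Qed.

Lemma sizeP (a b : seq nat) : prefix a b -> size a <= size b.
Proof. exact: size_prefix. Qed.

Lemma nth_prefix (u x : seq nat) j : prefix u x -> j < size u -> nth 0 x j = nth 0 u j.
Proof. by move=> /prefixP[s ->] hj; rewrite nth_cat hj. Qed.

Ltac slia := repeat match goal with H : ?T |- _ =>
  lazymatch T with
  | is_true (_ <= _) => fail | is_true (_ < _) => fail | is_true (_ && _) => fail
  | is_true (_ != _) => fail | is_true (_ == _) => fail
  | @eq nat _ _ => fail | ~ _ => fail | @eq bool _ _ => fail
  | _ => clear H end end; lia.

Lemma ptree_ind2 (P : ptree -> Prop) :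
  (forall ts, (forall k, k < size ts -> P (nth (Node [::]) ts k)) -> P (Node ts)) ->
  forall t, P t.
Proof.
move=> H; fix F 1. move=> [ts]; apply: H.
elim: ts => [|u l IH] [|k] hk.
- discriminate hk.
- discriminate hk.
- exact: F.
- exact: (IH k hk).
Qed.

Lemma subtree_cat t u v :
  subtree t (u ++ v) = if subtree t u is Some s then subtree s v else None.
Proof.
elim: u t => [|k u IH] [ts] //=. case: ifP => // _; exact: IH.
Qed.

Lemma subtree_rcons t u k :
  subtree t (rcons u k) = if subtree t u is Some s then
     (if k < size (children s) then Some (nth (Node [::]) (children s) k) else None)
     else None.
Proof.
rewrite -cats1 subtree_cat; case: (subtree t u) => // -[ts] /=.
by case: ifP.
Qed.

Lemma vertex_cat t u v : is_vertex t (u ++ v) -> is_vertex t u.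
Proof. by rewrite /is_vertex subtree_cat; case: (subtree t u). Qed.

Lemma vertex_prefix t u x : prefix u x -> is_vertex t x -> is_vertex t u.
Proof. by move=> /prefixP[v ->]; apply: vertex_cat. Qed.

Lemma vertex_rcons t u k : is_vertex t (rcons u k) -> k < nchildren t u.
Proof.
rewrite /is_vertex subtree_rcons /nchildren; case: (subtree t u) => // s.
by case: ifP.
Qed.

Definition isleaf t x := subtree t x = Some (Node [::]).

Lemma leaf_ext t x s : isleaf t x -> is_vertex t (x ++ s) -> s = [::].
Proof. by rewrite /is_vertex subtree_cat => ->; case: s. Qed.

Lemma leaf_prefix t x y : isleaf t x -> is_vertex t y -> prefix x y -> x = y.
Proof.
move=> Hx Hy /prefixP[s E]; subst y; by rewrite (leaf_ext Hx Hy) cats0.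
Qed.

Lemma isleaf_vertex t x : isleaf t x -> is_vertex t x.
Proof. by rewrite /isleaf /is_vertex => ->. Qed.

Lemma isleaf_nch t x : isleaf t x -> nchildren t x = 0.
Proof. by rewrite /isleaf /nchildren => ->. Qed.

Lemma nchildren_cat t u v s : subtree t u = Some s ->
  nchildren t (u ++ v) = nchildren s v.
Proof. by rewrite /nchildren subtree_cat => ->. Qed.

Fixpoint laux (i : nat) (l : seq ptree) : seq (seq nat) :=
  match l with [::] => [::] | u :: l' => map (cons i) (leaves u) ++ laux i.+1 l' end.

Lemma leavesE u l : leaves (Node (u :: l)) = laux 0 (u :: l).
Proof. by []. Qed.

Lemma mem_laux x i l : x \in laux i l <->
  exists k y, [/\ k < size l, x = (i + k) :: y & y \in leaves (nth (Node [::]) l k)].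
Proof.
elim: l i x => [|u l IH] i x /=; first by split=> // -[k [y []]].
rewrite mem_cat; split.
  case/orP.
    by case/mapP=> y Hy ->; exists 0, y; rewrite addn0.
  by case/IH=> k [y [hk -> hy]]; exists k.+1, y; rewrite addSnnS.
case=> -[|k] [y [hk -> hy]].
  by rewrite addn0 map_f.
apply/orP; right; apply/IH; exists k, y; split => //; by rewrite addSnnS.
Qed.

Lemma mem_leaves t x : x \in leaves t <-> isleaf t x.
Proof.
rewrite /isleaf.
elim/ptree_ind2: t x => -[|u l] IH x.
  rewrite /= inE; case: x => [|k x] /=; split => //; by move/eqP.
rewrite leavesE mem_laux; split.
  case=> k [y [hk -> hy]] /=. rewrite add0n hk. exact/(IH _ hk).
case: x => [|k y] //= . case: ifP => // hk /(IH _ hk) hy.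
by exists k, y; rewrite add0n.
Qed.

Lemma pairwise_laux i l :
  (forall k, k < size l -> pairwise lexlt (leaves (nth (Node [::]) l k))) ->
  pairwise lexlt (laux i l).
Proof.
elim: l i => [|u l IH] i //= H.
rewrite pairwise_cat; apply/and3P; split.
- apply/allrelP => x y /mapP[x' _ ->] /mem_laux[k [y' [_ -> _]]] /=.
  by rewrite ltn_addr.
- rewrite pairwise_map. have := H 0 erefl.
  apply: sub_pairwise => a b /= ->; by rewrite eqxx orbT.
- apply: IH => k hk; exact: (H k.+1).
Qed.

Lemma pairwise_leaves t : pairwise lexlt (leaves t).
Proof.
elim/ptree_ind2: t => -[|u l] IH //.
rewrite leavesE; exact: pairwise_laux.
Qed.

Lemma vertex_rcons_intro t u k : is_vertex t u -> k < nchildren t u -> is_vertex t (rcons u k).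
Proof.
rewrite /is_vertex /nchildren subtree_rcons; case: (subtree t u) => // s _ ->; by [].
Qed.

Definition kstep t (x : seq nat) j : bool :=
  (0 < j) && ((nth 0 x j == 0) || (nth 0 x j == (nchildren t (take j x)).-1)).

Fixpoint topd_aux t x m := if m is m'.+1 then (if kstep t x m' then topd_aux t x m' else m) else 0.
Definition topd t x := topd_aux t x (size x).
Definition top t x := take (topd t x) x.

Lemma topd_aux_le t x m : topd_aux t x m <= m.
Proof. elim: m => //= m IH; case: ifP => // _; exact: leqW. Qed.

Lemma topd_aux_steps t x m j : topd_aux t x m <= j < m -> kstep t x j.
Proof.
elim: m => [|m IH] /=; first by move=> h; exfalso; lia.
case: ifP => hk; last by move=> /andP[h1 h2]; lia.
move=> /andP[h1 h2]; rewrite ltnS leq_eqVlt in h2; case/orP: h2 => [/eqP -> //|h2].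
by apply: IH; rewrite h1 h2.
Qed.

Lemma topd_aux_min t x m : 0 < topd_aux t x m -> kstep t x (topd_aux t x m).-1 = false.
Proof.
elim: m => [|m IH] //=; case: ifP => hk //.
Qed.

Lemma kstep_prefix t (u x : seq nat) j : prefix u x -> j < size u -> kstep t x j = kstep t u j.
Proof.
move=> /prefixP[s ->] hj; rewrite /kstep nth_cat hj take_cat hj //.
Qed.

Lemma topd_aux_prefix t (u x : seq nat) m : prefix u x -> m <= size u ->
  topd_aux t x m = topd_aux t u m.
Proof.
move=> hp; elim: m => //= m IH hm.
rewrite (kstep_prefix t hp hm) IH //; exact: ltnW.
Qed.

Lemma top_kept t u v : kept_edge t u v -> top t u = top t v.
Proof.
case=> k [E [hk [hu hk2]]]; rewrite E.
have hp : prefix u (rcons u k) by exact: prefix_rcons.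
have ks : kstep t (rcons u k) (size u).
  rewrite /kstep nth_rcons ltnn eqxx -cats1 take_size_cat //.
  have -> : 0 < size u by case: (u) hu.
  by case: hk2 => ->; rewrite eqxx ?orbT.
rewrite /top /topd size_rcons /= ks (topd_aux_prefix t hp (leqnn _)).
by rewrite -cats1 takel_cat // topd_aux_le.
Qed.

Lemma comp_top_eq t x y : same_component t x y -> top t x = top t y.
Proof.
elim => [a b /top_kept| a | a b _ -> | a b c _ -> _ ->] //.
Qed.

Lemma chain t (x : seq nat) d : is_vertex t x -> d <= size x ->
  (forall j, d <= j < size x -> kstep t x j) -> same_component t (take d x) x.
Proof.
move=> hv hd hs.
suff H : forall m, d <= m <= size x -> same_component t (take d x) (take m x).
  by rewrite -{2}(take_size x); apply: H; rewrite hd leqnn.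
move=> m /andP[]; elim: m => [|m IH] h1 h2.
  have -> : d = 0 by lia.
  exact: rst_refl.
case: (eqVneq d m.+1) => [->|ne]; first exact: rst_refl.
have hdm : d <= m by lia.
apply: (rst_trans _ _ _ _ _ (IH hdm (ltnW h2))).
apply: rst_step.
have hm : m < size x by lia.
have ks : kstep t x m by apply: hs; rewrite hdm hm.
exists (nth 0 x m); split; [|split; [|split]].
- by rewrite (take_nth 0 hm).
- have := prefix_take x m.+1 => hp.
  have hv' : is_vertex t (rcons (take m x) (nth 0 x m)).
    by rewrite -(take_nth 0 hm); apply: (vertex_prefix hp hv).
  exact: vertex_rcons hv'.
- move: ks; rewrite /kstep => /andP[hm0 _] E.
  by move: (f_equal size E); rewrite size_take hm /=; lia.
- by move: ks; rewrite /kstep => /andP[_ /orP[/eqP -> | /eqP ->]]; [left|right].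
Qed.

Lemma top_prefix t x : prefix (top t x) x.
Proof. exact: prefix_take. Qed.

Lemma size_top t x : size (top t x) = topd t x.
Proof. by rewrite /top size_take /topd; case: ltngtP => // h; have := topd_aux_le t x (size x); lia. Qed.

Lemma comp_top t x : is_vertex t x -> same_component t (top t x) x.
Proof.
move=> hv; apply: chain => //; first exact: topd_aux_le.
by move=> j hj; apply: (topd_aux_steps hj).
Qed.

Lemma top_steps t x j : topd t x <= j < size x -> kstep t x j.
Proof. exact: topd_aux_steps. Qed.

Lemma top_min t x : 0 < topd t x -> kstep t x (topd t x).-1 = false.
Proof. exact: topd_aux_min. Qed.

Lemma same_comp_iff t x y : is_vertex t x -> is_vertex t y ->
  same_component t x y <-> top t x = top t y.
Proof.
move=> hx hy; split; first exact: comp_top_eq.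
move=> E; apply: (rst_trans _ _ _ (top t x)); first exact/rst_sym/comp_top.
rewrite E; exact: comp_top.
Qed.

Lemma zeros_kstep t (u z : seq nat) j : 0 < size u -> all (fun k => k == 0) z -> size u <= j ->
  kstep t (u ++ z) j.
Proof.
move=> hu hz hj; rewrite /kstep.
have -> : 0 < j by lia.
rewrite nth_cat ltnNge hj /=.
case: (ltnP (j - size u) (size z)) => h.
  by move/all_nthP: hz => /(_ 0 _ h) ->.
by rewrite nth_default.
Qed.

Lemma lm_ex0 (s : ptree) : exists z, all (fun k => k == 0) z /\ subtree s z = Some (Node [::]).
Proof.
elim/ptree_ind2: s => -[|c l] IH; first by exists [::].
case: (IH 0 erefl) => z [hz hs]; exists (0 :: z) => /=; by rewrite hz hs.
Qed.

Lemma lm_ex t u : is_vertex t u -> exists z, all (fun k => k == 0) z /\ isleaf t (u ++ z).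
Proof.
rewrite /is_vertex /isleaf; case E: (subtree t u) => [s|] // _.
case: (lm_ex0 s) => z [hz hs]; exists z; by rewrite subtree_cat E.
Qed.

Lemma rm_ex0 (s : ptree) : exists z,
  (forall j, j < size z -> nth 0 z j = (nchildren s (take j z)).-1) /\
  subtree s z = Some (Node [::]).
Proof.
elim/ptree_ind2: s => ts IH; case: ts IH => [|c l] IH; first by exists [::].
have hK : (size (c :: l)).-1 < size (c :: l) by [].
case: (IH _ hK) => z [hz hs]; exists ((size (c :: l)).-1 :: z); split.
  case=> [|j] /= hj; first by rewrite /nchildren.
  by rewrite hz // /nchildren /= ltnSn.
by rewrite /= ltnSn.
Qed.

Lemma rm_ex t u : is_vertex t u -> exists z,
  (forall j, size u <= j < size (u ++ z) ->
      nth 0 (u ++ z) j = (nchildren t (take j (u ++ z))).-1) /\ isleaf t (u ++ z).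
Proof.
rewrite /is_vertex /isleaf; case E: (subtree t u) => [s|] // _.
case: (rm_ex0 s) => z [hz hs]; exists z; split; last by rewrite subtree_cat E.
move=> j /andP[h1 h2]; rewrite size_cat in h2.
rewrite nth_cat take_cat ltnNge h1 /= (nchildren_cat _ E) hz //; lia.
Qed.

Lemma lm_min t u z y : all (fun k => k == 0) z -> isleaf t (u ++ z) -> isleaf t y ->
  prefix u y -> lexle (u ++ z) y.
Proof.
move=> hz hl hy /prefixP[y' E]; subst y; rewrite lexle_prefix.
case: (eqVneq z y') => [->|ne]; first by rewrite /lexle eqxx.
case/orP: (lexlt_total ne) => h; first by rewrite /lexle h orbT.
have hp := lexlt_zeros hz h.
have := leaf_prefix hy (isleaf_vertex hl).
rewrite prefix_catr // eqxx hp => /(_ erefl) /eqP.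
by rewrite eqseq_cat // eqxx /= => /eqP E; rewrite E eqxx in ne.
Qed.

Lemma rm_max t u z y :
  (forall j, size u <= j < size (u ++ z) ->
      nth 0 (u ++ z) j = (nchildren t (take j (u ++ z))).-1) -> isleaf t (u ++ z) ->
  is_vertex t y -> prefix u y -> lexle y (u ++ z).
Proof.
elim: z u y => [|a z IH] u y hz hl hy hp.
  by rewrite cats0 in hl *; rewrite (leaf_prefix hl hy hp) /lexle eqxx.
case/prefixP: hp => y' E; subst y.
have ha : a = (nchildren t u).-1.
  have := hz (size u); rewrite nth_cat ltnn subnn take_size_cat // size_cat /=.
  by move=> ->//; rewrite leqnn /=; lia.
rewrite lexle_prefix.
case: y' hy => [|b y'] hy; first by [].
have hb : b < nchildren t u.
  by apply: vertex_rcons; apply: (vertex_cat (v := y')); rewrite cat_rcons.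
rewrite lexle_cons; case: (ltngtP b a) => hab //=.
  lia.
subst b.
have := IH (rcons u a) (rcons u a ++ y'); rewrite lexle_prefix; apply.
- move=> j /andP[h1 h2]; rewrite cat_rcons; apply: hz; rewrite size_rcons in h1.
  rewrite cat_rcons in h2; rewrite h2 andbT; lia.
- by rewrite cat_rcons.
- by rewrite cat_rcons.
- exact: prefix_prefix.
Qed.

Lemma size_leaves n t : PST n t -> size (leaves t) = n.+1.
Proof. case=> _ [[h2 _] hw]; rewrite /weight in hw; lia. Qed.

Lemma leaf_isleaf n t i : PST n t -> 1 <= i <= n.+1 -> isleaf t (leaf t i).
Proof.
move=> H hi; apply/mem_leaves; rewrite /leaf; apply: mem_nth.
rewrite (size_leaves H); lia.
Qed.

Lemma leaf_vertex n t i : PST n t -> 1 <= i <= n.+1 -> is_vertex t (leaf t i).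
Proof. by move=> H hi; apply: isleaf_vertex; apply: leaf_isleaf H hi. Qed.

Lemma leaf_lt n t p q : PST n t -> 1 <= p -> p < q -> q <= n.+1 ->
  lexlt (leaf t p) (leaf t q).
Proof.
move=> H hp hpq hq; rewrite /leaf.
have /(pairwiseP [::]) hP := pairwise_leaves t.
apply: hP; rewrite -?topredE /= ?(size_leaves H); lia.
Qed.

Lemma leaf_le n t p q : PST n t -> 1 <= p -> p <= q -> q <= n.+1 ->
  lexle (leaf t p) (leaf t q).
Proof.
move=> H hp hpq hq; rewrite /lexle; case: (ltngtP p q) => h.
- by rewrite (leaf_lt H) // orbT.
- lia.
- by rewrite h eqxx.
Qed.

Lemma leaf_idx_lt n t p q : PST n t -> 1 <= p <= n.+1 -> 1 <= q <= n.+1 ->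
  lexlt (leaf t p) (leaf t q) -> p < q.
Proof.
move=> H hp hq h; case: (ltngtP p q) => // hpq.
  by have := leaf_lt H (_ : 1 <= q) hpq (_ : p <= n.+1); rewrite lexlt_asym //; apply => //; lia.
by rewrite hpq lexlt_irr in h.
Qed.

Lemma leaf_idx_le n t p q : PST n t -> 1 <= p <= n.+1 -> 1 <= q <= n.+1 ->
  lexle (leaf t p) (leaf t q) -> p <= q.
Proof.
move=> H hp hq /orP[/eqP E|h]; last by apply: ltnW; apply: (leaf_idx_lt H).
case: (ltngtP p q) => // hpq.
have := leaf_lt H (_ : 1 <= q) hpq (_ : p <= n.+1); rewrite E lexlt_irr; apply; lia.
Qed.

Lemma leaf_index n t x : PST n t -> isleaf t x -> exists p, 1 <= p <= n.+1 /\ leaf t p = x.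
Proof.
move=> H /mem_leaves hx; exists (index x (leaves t)).+1; split.
  have h : index x (leaves t) < n.+1 by rewrite -(size_leaves H) index_mem.
  lia.
by rewrite /leaf /= nth_index.
Qed.

Lemma conv_leaf n t w a b c : PST n t -> 1 <= a -> a <= b -> b <= c -> c <= n.+1 ->
  prefix w (leaf t a) -> prefix w (leaf t c) -> prefix w (leaf t b).
Proof.
move=> H ha hab hbc hc; apply: conv; apply: (leaf_le H); lia.
Qed.

Definition G t i := lcp (leaf t i) (leaf t i.+1).

Lemma sector n t i : PST n t -> 1 <= i <= n ->
 [/\ prefix (G t i) (leaf t i), prefix (G t i) (leaf t i.+1),
     size (G t i) < size (leaf t i), size (G t i) < size (leaf t i.+1) &
     nth 0 (leaf t i) (size (G t i)) < nth 0 (leaf t i.+1) (size (G t i)) /\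
     nth 0 (leaf t i.+1) (size (G t i)) < nchildren t (G t i)].
Proof.
move=> H hi.
have hlt : lexlt (leaf t i) (leaf t i.+1) by apply: (leaf_lt H); lia.
have l1 := leaf_isleaf H (_ : 1 <= i <= n.+1).
have l2 := leaf_isleaf H (_ : 1 <= i.+1 <= n.+1).
have np1 : ~~ prefix (leaf t i) (leaf t i.+1).
  apply/negP => hp; have E := leaf_prefix (l1 ltac:(lia)) (isleaf_vertex (l2 ltac:(lia))) hp.
  by rewrite E lexlt_irr in hlt.
have np2 : ~~ prefix (leaf t i.+1) (leaf t i).
  apply/negP => hp; have E := leaf_prefix (l2 ltac:(lia)) (isleaf_vertex (l1 ltac:(lia))) hp.
  by rewrite E lexlt_irr in hlt.
case: (lcp_split np1 np2) => s1 s2 s3.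
have p1 := lcp_prefixl (leaf t i) (leaf t i.+1).
have p2 := lcp_prefixr (leaf t i) (leaf t i.+1).
split => //; split; first exact: s3.
apply: vertex_rcons; apply: (vertex_prefix (prefix_nth p2 s2)).
exact: isleaf_vertex (l2 ltac:(lia)).
Qed.

Lemma last_child_leaf n t : PST n t -> isleaf t [:: (nchildren t [::]).-1].
Proof.
case: t => ts [_ [[h2 hlast] _]]; rewrite /isleaf /nchildren /=.
case: ts h2 hlast => [|c l] //= _ hlast.
by rewrite ltnSn /= (nth_last (Node [::]) (c :: l)) /= hlast.
Qed.

Lemma prefix_le (a b x : seq nat) : prefix a x -> prefix b x -> size a <= size b -> prefix a b.
Proof.
move=> ha hb hs; case/orP: (prefix_total ha hb) => // h.
by rewrite (prefix_sizeE h hs) prefix_refl.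
Qed.

Lemma chain_top t (x : seq nat) d : is_vertex t x -> d <= size x ->
  (forall j, d <= j < size x -> kstep t x j) -> top t (take d x) = top t x.
Proof. by move=> *; apply: comp_top_eq; apply: chain. Qed.

Lemma top_cmp t (x y : seq nat) : prefix (top t y) x -> size (top t x) < size (top t y) -> False.
Proof.
move=> hp hs.
set j := (size (top t y)).-1.
have hj : j < size (top t y) by rewrite /j; lia.
have h0 : 0 < topd t y by rewrite -size_top; lia.
have := top_min h0; rewrite -size_top -/j.
rewrite (kstep_prefix t (top_prefix t y) hj) -(kstep_prefix t hp hj).
rewrite top_steps //; rewrite -size_top /j; have := sizeP hp; lia.
Qed.

Lemma pi_nc n t p q r s : PST n t -> 1 <= p -> p < q -> q < r -> r < s -> s <= n.+1 ->
  top t (leaf t p) = top t (leaf t r) -> top t (leaf t q) = top t (leaf t s) ->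
  top t (leaf t p) = top t (leaf t q).
Proof.
move=> H hp hpq hqr hrs hs E1 E2.
set T := top t (leaf t p); set T' := top t (leaf t q).
have hTp : prefix T (leaf t p) by exact: top_prefix.
have hTr : prefix T (leaf t r) by rewrite /T E1; exact: top_prefix.
have hTq : prefix T (leaf t q) by apply: (conv_leaf H _ _ _ _ hTp hTr); lia.
have hT'q : prefix T' (leaf t q) by exact: top_prefix.
have hT's : prefix T' (leaf t s) by rewrite /T' E2; exact: top_prefix.
have hT'r : prefix T' (leaf t r) by apply: (conv_leaf H _ _ _ _ hT'q hT's); lia.
case: (ltngtP (size T) (size T')) => h.
- exfalso; apply: (top_cmp (x := leaf t r) (y := leaf t q)); first exact: hT'r.
  by rewrite -E1.
- exfalso; exact: (top_cmp hTq h).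
- apply: prefix_antisym; apply: prefix_le; eauto; by rewrite h.
Qed.

Lemma C_nc n t i k j m : PST n t -> 1 <= i -> i < k -> k < j -> j < m -> m <= n ->
  G t i = G t j -> G t k = G t m -> G t i = G t k.
Proof.
move=> H hi hik hkj hjm hm E1 E2.
have [a1 a2 _ _ _] := sector H (ltac:(lia) : 1 <= i <= n).
have [b1 b2 _ _ _] := sector H (ltac:(lia) : 1 <= j <= n).
have [c1 c2 _ _ _] := sector H (ltac:(lia) : 1 <= k <= n).
have [d1 d2 _ _ _] := sector H (ltac:(lia) : 1 <= m <= n).
apply: prefix_antisym.
- rewrite {2}/G; apply: lcp_max.
  + apply: (conv_leaf (a:=i) (c:=j.+1) H); first [lia | exact: a1 | (rewrite E1; exact: b2)].
  + apply: (conv_leaf (a:=i) (c:=j.+1) H); first [lia | exact: a1 | (rewrite E1; exact: b2)].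
- rewrite E1 {2}/G; apply: lcp_max.
  + apply: (conv_leaf (a:=k) (c:=m.+1) H); first [lia | exact: c1 | (rewrite E2; exact: d2)].
  + apply: (conv_leaf (a:=k) (c:=m.+1) H); first [lia | exact: c1 | (rewrite E2; exact: d2)].
Qed.

Lemma no_mixed n t i j e : PST n t -> 1 <= i -> i < e -> e <= j -> j <= n ->
  G t i = G t j -> prefix (top t (leaf t e)) (G t i) -> False.
Proof.
move=> H hi hie hej hj E hT.
have [a1 a2 a3 a4 [a5 a6]] := sector H (ltac:(lia) : 1 <= i <= n).
have [b1 b2 b3 b4 [b5 b6]] := sector H (ltac:(lia) : 1 <= j <= n).
rewrite -E in b1 b2 b3 b4 b5 b6.
set w := G t i in a1 a2 a3 a4 a5 a6 b1 b2 b3 b4 b5 b6 hT.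
have we : prefix w (leaf t e).
  by apply: (conv_leaf (a:=i) (c:=j.+1) H) => //; lia.
have le_ : isleaf t (leaf t e) by apply: (leaf_isleaf H); lia.
have se : size w < size (leaf t e).
  rewrite ltnNge; apply/negP => hs.
  have E2 := prefix_sizeE we hs.
  have hv : is_vertex t (leaf t i.+1) by apply: (leaf_vertex H); lia.
  have := leaf_prefix le_ hv; rewrite -E2 => /(_ a2) E3.
  by rewrite E3 ltnn in a4.
have i1 : nth 0 (leaf t i.+1) (size w) <= nth 0 (leaf t e) (size w).
  apply: idx_le => //; apply: (leaf_le H); lia.
have i2 : nth 0 (leaf t e) (size w) <= nth 0 (leaf t j) (size w).
  apply: idx_le => //; apply: (leaf_le H); lia.
have ks : kstep t (leaf t e) (size w).
  apply: top_steps; rewrite se andbT -size_top; exact: sizeP.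
move: ks; rewrite /kstep.
have -> : take (size w) (leaf t e) = w by apply/eqP; rewrite -prefixE.
move=> /andP[_ /orP[/eqP h|/eqP h]]; lia.
Qed.

Definition nocross n t i j :=
  forall p q, 1 <= p <= n -> 1 <= q <= n -> top t (leaf t p) = top t (leaf t q) ->
     ~ (p <= i /\ i < q /\ q <= j) /\ ~ (i < p /\ p <= j /\ j < q).

Lemma maxi n t : PST n t -> forall d i j, j - i <= d -> 1 <= i -> i < j -> j <= n ->
  nocross n t i j -> G t i = G t j.
Proof.
move=> H; elim=> [|d IH] i j hd hi hij hj hyp; first slia.
have [a1 a2 a3 a4 [a5 a6]] := sector H (ltac:(slia) : 1 <= i <= n).
set w := G t i in a1 a2 a3 a4 a5 a6 *.
set b := nth 0 (leaf t i.+1) (size w) in a5 a6.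
have hc : prefix (rcons w b) (leaf t i.+1) := prefix_nth a2 a4.
have vi1 : is_vertex t (leaf t i.+1) by apply: (leaf_vertex H); slia.
have vw : is_vertex t w := vertex_prefix a2 vi1.
have vc : is_vertex t (rcons w b) := vertex_rcons_intro vw a6.
have gt_i : forall x, prefix (rcons w b) x -> lexlt (leaf t i) x.
  move=> x hx; have hwx : prefix w x := prefix_trans (prefix_rcons w b) hx.
  have hsx : size w < size x by have := sizeP hx; rewrite size_rcons.
  apply: (idx_lt a1 hwx a3 hsx).
  by rewrite (nth_prefix hx) ?size_rcons // nth_rcons ltnn eqxx.
have li : isleaf t (leaf t i) by apply: (leaf_isleaf H); slia.
have li1 : isleaf t (leaf t i.+1) by apply: (leaf_isleaf H); slia.
have [z [hz hl]] := lm_ex vc.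
have [P [hP EP]] := leaf_index H hl.
have hPi : P <= i.+1.
  apply: (leaf_idx_le H) => //; first slia.
  rewrite EP; exact: lm_min hz hl li1 hc.
have hPi' : i < P.
  apply: (leaf_idx_lt H) => //; first slia.
  rewrite EP; apply: gt_i; exact: prefix_prefix.
case hB: ((w != [::]) && (b == (nchildren t w).-1)).
  case/andP: hB => hw0 /eqP hb.
  have sw : 0 < size w by case: (w) hw0.
  have [zm [hzm hlm]] := lm_ex vw.
  have [m [hm Em]] := leaf_index H hlm.
  have hmi : m <= i.
    apply: (leaf_idx_le H) => //; first slia.
    rewrite Em; exact: lm_min hzm hlm li a1.
  have T1 : top t (leaf t m) = top t w.
    rewrite Em -{2}(take_size_cat zm (erefl (size w))).
    symmetry; apply: chain_top; first exact: isleaf_vertex.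
      by rewrite size_cat leq_addr.
    move=> j0 /andP[h1 _]; exact: zeros_kstep.
  have T2 : top t (leaf t P) = top t w.
    rewrite EP cat_rcons -{2}(take_size_cat (b :: z) (erefl (size w))).
    symmetry; apply: chain_top; first by rewrite -cat_rcons; exact: isleaf_vertex.
      by rewrite size_cat leq_addr.
    move=> j0 /andP[h1 _].
    case: (ltngtP j0 (size w)) => h2; first slia.
      rewrite -cat_rcons; apply: zeros_kstep => //; by rewrite size_rcons.
    rewrite /kstep h2 sw nth_cat ltnn subnn /= take_size_cat //.
    by rewrite hb eqxx orbT.
  have := hyp m P (ltac:(slia)) (ltac:(slia)); rewrite T1 T2 => /(_ erefl) [h _].
  exfalso; apply: h; slia.
have hb1 : 0 < b by slia.
have hbn : b.+1 < nchildren t w.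
  case: (eqVneq w [::]) hB => [hw0|hw0] /= hB'; last by move: hB' => /eqP; slia.
  case: (eqVneq b (nchildren t w).-1) => [hb|hb]; last slia.
  exfalso.
  have lb : isleaf t [:: b] by rewrite hb hw0; exact: last_child_leaf H.
  have E1 : leaf t i.+1 = [:: b].
    symmetry; apply: (leaf_prefix lb vi1); move: hc; by rewrite hw0.
  have hle : lexle (leaf t n.+1) (leaf t i.+1).
    rewrite E1; apply: (rm_max (u := [::]) (z := [:: b])).
    - case=> [|j0] //= _; by rewrite hb hw0.
    - exact: lb.
    - apply: (leaf_vertex H); slia.
    - exact: prefix0s.
  have := leaf_idx_le H (ltac:(slia) : 1 <= n.+1 <= n.+1) (ltac:(slia) : 1 <= i.+1 <= n.+1) hle.
  slia.
set c := rcons w b.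
have sc : 0 < size c by rewrite size_rcons.
have topc : top t c = c.
  have kc : kstep t c (size w) = false.
    rewrite /kstep /c nth_rcons ltnn eqxx -cats1 take_size_cat //.
    case: (eqVneq w [::]) hB => [->|hw0] //= hB'.
    rewrite hB' orbF.
    have -> : (b == 0) = false by apply/eqP; slia.
    by rewrite andbF.
  rewrite /top /topd /c size_rcons /= -/c kc take_oversize //.
  by rewrite size_rcons.
have [z' [hz' hl']] := rm_ex vc.
have [R [hR ER]] := leaf_index H hl'.
have TP : top t (leaf t P) = c.
  have : top t (take (size c) (c ++ z)) = top t (c ++ z).
    apply: chain_top; first exact: isleaf_vertex.
      by rewrite size_cat leq_addr.
    move=> j0 /andP[h1 _]; exact: zeros_kstep.
  by rewrite take_size_cat // topc EP => <-.
have TR : top t (leaf t R) = c.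
  have : top t (take (size c) (c ++ z')) = top t (c ++ z').
    apply: chain_top; first exact: isleaf_vertex.
      by rewrite size_cat leq_addr.
    move=> j0 hj0; rewrite /kstep hz' //.
    have -> : 0 < j0 by move: hj0 => /andP[h1 _]; slia.
    by rewrite eqxx orbT.
  by rewrite take_size_cat // topc ER => <-.
have hPR : P <= R.
  apply: (leaf_idx_le H) => //; rewrite EP ER; exact: lm_min hz hl hl' (prefix_prefix c z').
have vc' : is_vertex t (rcons w b.+1) := vertex_rcons_intro vw hbn.
have [z3 [hz3 hl3]] := lm_ex vc'.
have [Q [hQ EQ]] := leaf_index H hl3.
have pwR : prefix w (leaf t R).
  by rewrite ER; apply: prefix_trans (prefix_rcons w b) (prefix_prefix c z').
have pwQ : prefix w (leaf t Q).
  by rewrite EQ; apply: prefix_trans (prefix_rcons w b.+1) (prefix_prefix _ z3).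
have nR : nth 0 (leaf t R) (size w) = b.
  by rewrite ER nth_cat size_rcons ltnSn nth_rcons ltnn eqxx.
have hRQ : R < Q.
  apply: (leaf_idx_lt H) => //; apply: (idx_lt pwR pwQ).
  - by rewrite ER size_cat size_rcons; slia.
  - by rewrite EQ size_cat size_rcons; slia.
  - by rewrite nR EQ nth_cat size_rcons ltnSn nth_rcons ltnn eqxx.
have hRj : R <= j.
  case: (leqP R j) => // hjR; exfalso.
  have := hyp P R (ltac:(slia)) (ltac:(slia)); rewrite TP TR => /(_ erefl) [_ h].
  apply: h; slia.
have GR : G t R = w.
  have li2 : isleaf t (leaf t R.+1) by apply: (leaf_isleaf H); slia.
  have pw2 : prefix w (leaf t R.+1).
    by apply: (conv_leaf (a:=R) (c:=Q) H) => //; slia.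
  have sw2 : size w < size (leaf t R.+1).
    rewrite ltnNge; apply/negP => hs.
    have E2 := prefix_sizeE pw2 hs.
    have := leaf_prefix li2 vc; rewrite -E2 => /(_ (prefix_rcons w b)) E3.
    by move: (f_equal size E3); rewrite size_rcons; slia.
  rewrite /G; apply: lcp_eq => //.
  - by rewrite ER size_cat size_rcons; slia.
  - rewrite nR; apply/eqP => E.
    have pc2 : prefix c (leaf t R.+1) by rewrite /c E; exact: prefix_nth pw2 sw2.
    have := rm_max hz' hl' (isleaf_vertex li2) pc2; rewrite -ER => hle.
    have := leaf_idx_le H (ltac:(slia) : 1 <= R.+1 <= n.+1) (ltac:(slia) : 1 <= R <= n.+1) hle.
    slia.
case: (ltngtP R j) => hRj'; last by rewrite -hRj' GR.
- rewrite -GR; apply: (IH R j) => //; try slia.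
  move=> p q hp hq Epq; split.
  + case=> h1 [h2 h3]; case: (leqP p i) => hpi.
      by apply: (hyp p q hp hq Epq).1; split; [|split]; slia.
    have cp : prefix c (leaf t p).
      apply: (conv_leaf (a:=P) (c:=R) H); try slia.
      * by rewrite EP; exact: prefix_prefix.
      * by rewrite ER; exact: prefix_prefix.
    have ctp : prefix c (top t (leaf t p)).
      apply: (prefix_le cp (top_prefix t _)).
      rewrite leqNgt; apply/negP => hs.
      by apply: (top_cmp (t:=t) (x := leaf t p) (y := c)); rewrite topc.
    have cq : prefix c (leaf t q).
      by rewrite Epq in ctp; exact: prefix_trans ctp (top_prefix t _).
    have := rm_max hz' hl' (leaf_vertex H (ltac:(slia) : 1 <= q <= n.+1)) cq.
    rewrite -ER => hle.
    have := leaf_idx_le H (ltac:(slia) : 1 <= q <= n.+1) (ltac:(slia) : 1 <= R <= n.+1) hle.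
    slia.
  + case=> h1 [h2 h3]; apply: (hyp p q hp hq Epq).2; split; [|split]; slia.
- slia.
Qed.

Definition sig0 t i j := G t i = G t j.

Lemma piRel_iff n t p q : PST n t -> 1 <= p <= n -> 1 <= q <= n ->
  piRel t p q <-> top t (leaf t p) = top t (leaf t q).
Proof.
move=> H hp hq; apply: same_comp_iff; apply: (leaf_vertex H); slia.
Qed.

Lemma top_sector n t a e b : PST n t -> 1 <= a -> a <= e -> e < b -> b <= n ->
  top t (leaf t a) = top t (leaf t b) -> prefix (top t (leaf t a)) (G t e).
Proof.
move=> H ha hae heb hb E.
have pa : prefix (top t (leaf t a)) (leaf t a) := top_prefix t _.
have pb : prefix (top t (leaf t a)) (leaf t b) by rewrite E; exact: top_prefix.
rewrite /G; apply: lcp_max.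
- apply: (conv_leaf (a:=a) (c:=b) H) => //; slia.
- apply: (conv_leaf (a:=a) (c:=b) H) => //; slia.
Qed.

Lemma nc_sig0 n t : PST n t -> noncrossing_union n (piRel t) (sig0 t).
Proof.
move=> H [[] a] [[] b] [[] c] [[] d]; rewrite /in_n /pt_pos /union_rel /=;
  move=> ha hb hc hd h1 h2 h3 hac hbd; try done; rewrite -!muln2 in h1 h2 h3.
- apply: (C_nc (i:=a) (k:=b) (j:=c) (m:=d) H) => //; slia.
- exfalso; apply: (no_mixed (i:=a) (j:=c) (e:=b) H) => //; try slia.
  rewrite hac; move/(piRel_iff H hb hd): hbd => E.
  apply: (top_sector H _ _ _ _ E); slia.
- exfalso; apply: (no_mixed (i:=b) (j:=d) (e:=c) H) => //; try slia.
  move/(piRel_iff H ha hc): hac => E.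
  rewrite -E; apply: (top_sector H _ _ _ _ E); slia.
- apply/(piRel_iff H ha hb).
  move/(piRel_iff H ha hc): hac => E1; move/(piRel_iff H hb hd): hbd => E2.
  apply: (pi_nc H _ _ _ _ _ E1 E2); slia.
Qed.

Lemma max_sig n t sigma : PST n t -> is_partition n sigma ->
  noncrossing_union n (piRel t) sigma ->
  forall i j, in_n n i -> in_n n j -> sigma i j -> G t i = G t j.
Proof.
move=> H [_ [hsym _]] hnc.
suff K : forall i j, in_n n i -> in_n n j -> i < j -> sigma i j -> G t i = G t j.
  move=> i j hi hj hs; case: (ltngtP i j) => h.
  - exact: K.
  - by symmetry; apply: K => //; apply: hsym.
  - by rewrite h.
move=> i j hi hj hij hs; rewrite /in_n in hi hj.
apply: (maxi H (leqnn (j - i))); try slia.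
move=> p q hp hq E; split.
- case=> h1 [h2 h3].
  have := hnc (false, p) (true, i) (false, q) (true, j).
  rewrite /pt_pos /union_rel /= -!muln2; apply => //; try slia.
  exact/(piRel_iff H hp hq).
- case=> h1 [h2 h3].
  have := hnc (true, i) (false, p) (true, j) (false, q).
  rewrite /pt_pos /union_rel /= -!muln2; apply => //; try slia.
  exact/(piRel_iff H hp hq).
Qed.

Unset Implicit Arguments.

Theorem mainTheorem5 (n : nat) (t : ptree) :
  1 <= n -> PST n t ->
  (exists sigma, kreweras n (piRel t) sigma) /\
  (forall sigma, kreweras n (piRel t) sigma ->
     forall i j, in_n n i -> in_n n j ->
       (sigma i j <-> exists v, clear_view t v i /\ clear_view t v j)).
Proof.
move=> hn H.
have part0 : is_partition n (sig0 t).
  split; first by []. split; first by rewrite /sig0 => i j _ _ ->.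
  by rewrite /sig0 => i j k _ _ _ -> ->.
have nc0 := nc_sig0 H.
have cv : forall i, in_n n i -> clear_view t (G t i) i.
  move=> i hi; have [a1 a2 a3 a4 [a5 a6]] := sector H hi.
  split; last exact/is_lca_lcp.
  split; last by slia.
  apply: (vertex_prefix a2); apply: (leaf_vertex H); rewrite /in_n in hi; slia.
split.
  exists (sig0 t); split => //; split => // sigma' hp hnc i j hi hj hs.
  exact: (max_sig H hp hnc hi hj hs).
move=> sigma [hp [hnc hmax]] i j hi hj.
have E : sigma i j <-> G t i = G t j.
  split; first exact: (max_sig H hp hnc).
  move=> h; exact: (hmax (sig0 t) part0 nc0 i j hi hj h).
rewrite E; split.
  by move=> h; exists (G t i); split; [exact: cv | rewrite h; exact: cv].
case=> v [[_ /is_lca_lcp h1] [_ /is_lca_lcp h2]].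
by rewrite /G -h1 -h2.
Qed.
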